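(* Work in the max-plus semifield $(\mathbb{R}\cup\{-\infty\},\oplus=\max,\otimes=+,\mathbb{0}=-\infty,\mathbb{1}=0)$. Let $m\geq1$, let $p_{1j},p_{2j}\in\mathbb{R}$, $w_{j}>0$, $d_{j}>0$, $h_{j}\in\mathbb{R}$ for $j=1,\ldots,m$, and let $f_{1}\leq g_{1}$, $f_{2}\leq g_{2}$, $a\leq b$ be reals. Consider the problem of minimizing over $(x_{1},x_{2})^{T}\in\mathbb{R}^{2}$ $$\max_{1\leq j\leq m}\big(w_{j}(|x_{1}-p_{1j}|+|x_{2}-p_{2j}|)+h_{j}\big)$$ subject to $|x_{1}-p_{1j}|+|x_{2}-p_{2j}|\leq d_{j}$ ($j=1,\ldots,m$), $f_{1}-x_{2}\leq x_{1}\leq g_{1}-x_{2}$, $f_{2}+x_{1}\leq x_{2}\leq g_{2}+x_{1}$, and $a\leq x_{1}\leq b$. In max-plus notation, let $\bm{o}_{j}=(o_{1j},o_{2j})^{T}$ with $o_{1j}=p_{1j}p_{2j}$, $o_{2j}=p_{1j}^{-1}p_{2j}$; let $\bm{f}=(f_{1},f_{2})^{T}$, $\bm{g}=(g_{1},g_{2})^{T}$, $$\bm{B}=\begin{pmatrix}\mathbb{0}&a^{2}\\ b^{-2}&\mathbb{0}\end{pmatrix},\qquad \bm{B}^{\ast}=\begin{pmatrix}\mathbb{1}&a^{2}\\ b^{-2}&\mathbb{1}\end{pmatrix};$$ $$\bm{s}=\bigoplus_{1\leq j\leq m}d_{j}^{-1}\bm{o}_{j}\oplus\bm{f},\qquad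 \bm{t}^{-}=\bigoplus_{1\leq j\leq m}d_{j}^{-1}\bm{o}_{j}^{-}\oplus\bm{g}^{-}.$$ Suppose $\bm{t}^{-}\bm{B}^{\ast}\bm{s}\leq\mathbb{1}$. Then the minimum value of the problem is $$\theta=\bigoplus_{1\leq j,l\leq m}\left(h_{j}^{\frac{w_{l}}{w_{j}+w_{l}}}h_{l}^{\frac{w_{j}}{w_{j}+w_{l}}}(\bm{o}_{j}^{-}\bm{B}^{\ast}\bm{o}_{l})^{\frac{w_{j}w_{l}}{w_{j}+w_{l}}}\oplus h_{j}(\bm{o}_{j}^{-}\bm{B}^{\ast}\bm{s})^{w_{j}}\oplus h_{l}(\bm{t}^{-}\bm{B}^{\ast}\bm{o}_{l})^{w_{l}}\right),$$ and, with $$\bm{q}=\bigoplus_{1\leq j\leq m}\theta^{-1/w_{j}}h_{j}^{1/w_{j}}\bm{o}_{j},\qquad \bm{r}^{-}=\bigoplus_{1\leq j\leq m}\theta^{-1/w_{j}}h_{j}^{1/w_{j}}\bm{o}_{j}^{-},$$ all solution vectors $\bm{x}=(x_{1},x_{2})^{T}$ have entries $x_{1}=y_{1}^{1/2}y_{2}^{-1/2}$, $x_{2}=y_{1}^{1/2}y_{2}^{1/2}$, where $\bm{y}=(y_{1},y_{2})^{T}=\bm{B}^{\ast}\bm{u}$ and the parameter vector $\bm{u}$ satisfies $\bm{q}\oplus\bm{s}\leq\bm{u}\leq((\bm{r}^{-}\oplus\bm{t}^{-})\bm{B}^{\ast})^{-}$.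
   Context: In the max-plus semifield, the product $xy$ means $x+y$, $x^{-1}=-x$, the power $x^{p}$ means $px$ for real $p$, and the order is the usual order of reals. Matrix and vector operations use $\max$ in place of addition and $+$ in place of multiplication; inequalities between vectors are componentwise. For a column vector $\bm{x}=(x_{i})$ with real entries, $\bm{x}^{-}$ is the row vector $(-x_{i})$ (and for a row vector, the column vector of negated entries). $\mathbb{0}=-\infty$ and $\mathbb{1}=0$. *)

(* Defs.v *)
(* Max-plus objects are written out in ordinary arithmetic:
   max-plus "x (+) y" = Num.max x y, "x (x) y" = x + y, x^p = p * x, x^-1 = -x. *)
From HB Require Import structures.
From mathcomp Require Import all_boot all_order all_algebra.
From mathcomp Require Import reals.
Set Implicit Arguments. Unset Strict Implicit. Unset Printing Implicit Defensive.
Import Order.TTheory GRing.Theory Num.Theory.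
Local Open Scope ring_scope.

Section MaxPlus.
Variable R : realType.

(* maximum of a finite nonempty family (for n = 0 it is an irrelevant 0);
   the first value is used as the neutral element, which is harmless since
   max is idempotent *)
Definition bmax (n : nat) (F : 'I_n -> R) : R :=
  \big[Num.max/head 0 (map F (enum 'I_n))]_(j < n) F j.

Definition vec2 (x1 x2 : R) : 'I_2 -> R :=
  fun i => if val i == 0%N then x1 else x2.

Definition vmax (x y : 'I_2 -> R) : 'I_2 -> R := fun i => Num.max (x i) (y i).

Definition vconj (x : 'I_2 -> R) : 'I_2 -> R := fun i => - x i.

Definition mxv (A : 'I_2 -> 'I_2 -> R) (x : 'I_2 -> R) : 'I_2 -> R :=
  fun i => bmax (fun k => A i k + x k).

Definition dotmp (r x : 'I_2 -> R) : R := bmax (fun k => r k + x k).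

Definition vxm (r : 'I_2 -> R) (A : 'I_2 -> 'I_2 -> R) : 'I_2 -> R :=
  fun k => bmax (fun i => r i + A i k).

Definition Bstar (a b : R) : 'I_2 -> 'I_2 -> R :=
  fun i k => if val i == val k then 0
             else if val i == 0%N then 2 * a else - (2 * b).

Definition ovec (m : nat) (p1 p2 : 'I_m -> R) (j : 'I_m) : 'I_2 -> R :=
  vec2 (p1 j + p2 j) (p2 j - p1 j).

Definition objective (m : nat) (p1 p2 w h : 'I_m -> R) (x1 x2 : R) : R :=
  bmax (fun j => w j * (`|x1 - p1 j| + `|x2 - p2 j|) + h j).

Definition feasible (m : nat) (p1 p2 d : 'I_m -> R) (f1 f2 g1 g2 a b : R)
    (x1 x2 : R) : Prop :=
  (forall j, `|x1 - p1 j| + `|x2 - p2 j| <= d j) /\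
  f1 - x2 <= x1 /\ x1 <= g1 - x2 /\
  f2 + x1 <= x2 /\ x2 <= g2 + x1 /\
  a <= x1 /\ x1 <= b.

Definition svec (m : nat) (p1 p2 d : 'I_m -> R) (f1 f2 : R) : 'I_2 -> R :=
  vmax (fun i => bmax (fun j => - d j + ovec p1 p2 j i)) (vec2 f1 f2).

Definition tmvec (m : nat) (p1 p2 d : 'I_m -> R) (g1 g2 : R) : 'I_2 -> R :=
  vmax (fun i => bmax (fun j => - d j + vconj (ovec p1 p2 j) i))
       (vconj (vec2 g1 g2)).

Definition theta (m : nat) (p1 p2 w d h : 'I_m -> R) (f1 f2 g1 g2 a b : R) : R :=
  let B := Bstar a b in
  let o := ovec p1 p2 in
  let s := svec p1 p2 d f1 f2 in
  let tm := tmvec p1 p2 d g1 g2 in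
  bmax (fun j => bmax (fun l =>
    Num.max
      (w l / (w j + w l) * h j + w j / (w j + w l) * h l
         + (w j * w l) / (w j + w l) * dotmp (vconj (o j)) (mxv B (o l)))
      (Num.max (h j + w j * dotmp (vconj (o j)) (mxv B s))
               (h l + w l * dotmp tm (mxv B (o l)))))).

Definition qvec (m : nat) (p1 p2 w h : 'I_m -> R) (th : R) : 'I_2 -> R :=
  fun i => bmax (fun j => - (th / w j) + h j / w j + ovec p1 p2 j i).

Definition rmvec (m : nat) (p1 p2 w h : 'I_m -> R) (th : R) : 'I_2 -> R :=
  fun i => bmax (fun j => - (th / w j) + h j / w j + vconj (ovec p1 p2 j) i).

End MaxPlus.

(* Main.v *)
Require Import Defs.
From HB Require Import structures.
From mathcomp Require Import all_boot all_order all_algebra.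
From mathcomp Require Import reals.
From mathcomp Require Import ring lra.
Import Order.TTheory GRing.Theory Num.Theory.
Local Open Scope ring_scope.
Set Implicit Arguments. Unset Strict Implicit.

Section Aux.
Variable R : realType.

Lemma big_le_seq (I : eqType) (s : seq I) (F : I -> R) (x0 c : R) :
  x0 <= c -> (forall i, i \in s -> F i <= c) ->
  \big[Num.max/x0]_(i <- s) F i <= c.
Proof.
elim: s => [|i s IH] H0 H; first by rewrite big_nil.
rewrite big_cons ge_max H ?mem_head //= IH // => k Hk.
by apply: H; rewrite in_cons Hk orbT.
Qed.

Lemma le_big_seq (I : eqType) (s : seq I) (F : I -> R) (x0 : R) j :
  j \in s -> F j <= \big[Num.max/x0]_(i <- s) F i.
Proof.
elim: s => [|i s IH] //; rewrite in_cons big_cons le_max.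
case/orP=> [/eqP -> | Hj]; first by rewrite lexx.
by rewrite IH ?orbT.
Qed.

Lemma le_bmax n (F : 'I_n -> R) j : F j <= bmax F.
Proof. exact: le_big_seq (mem_index_enum j). Qed.

Lemma bmax_le n (F : 'I_n -> R) c : (0 < n)%N ->
  (forall j, F j <= c) -> bmax F <= c.
Proof.
move=> hn H; apply: big_le_seq => [|i _]; last exact: H.
case E: (enum 'I_n) => [|j0 s] /=; last exact: H.
by move: (size_enum_ord n); rewrite E /= => h; rewrite -h in hn.
Qed.

Lemma bmaxP n (F : 'I_n -> R) c : (0 < n)%N ->
  (bmax F <= c <-> forall j, F j <= c).
Proof.
move=> hn; split; last exact: bmax_le.
by move=> H j; apply: le_trans H; apply: le_bmax.
Qed.

Lemma I2P (P : 'I_2 -> Prop) : P ord0 -> P ord_max -> forall i, P i.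
Proof.
move=> H0 H1 [[|[|k]] hk].
- by rewrite (_ : Ordinal hk = ord0) //; apply: val_inj.
- by rewrite (_ : Ordinal hk = ord_max) //; apply: val_inj.
- by [].
Qed.

End Aux.


Section Aux2.
Variable R : realType.
Implicit Types x y c v : R.

Lemma big_ex_seq {I : eqType} (s : seq I) (F : I -> R) (x0 : R) :
  \big[Num.max/x0]_(i <- s) F i = x0 \/
  exists2 i, i \in s & \big[Num.max/x0]_(i <- s) F i = F i.
Proof.
elim: s => [|i s IH]; first by left; rewrite big_nil.
rewrite big_cons; set M := \big[_/_]_(_ <- _) _ in IH *.
rewrite /Num.max; case: ifP => _.
- case: IH => [->|[k Hk ->]]; first by left.
  by right; exists k => //; rewrite in_cons Hk orbT.
- by right; exists i => //; rewrite mem_head.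
Qed.

Lemma bmax_ex n (F : 'I_n -> R) : (0 < n)%N -> exists j, bmax F = F j.
Proof.
move=> hn; rewrite /bmax.
case: (big_ex_seq (index_enum 'I_n) F (head 0 (map F (enum 'I_n)))).
- move=> ->; case E: (enum 'I_n) => [|j0 s] /=; last by exists j0.
  by move: (size_enum_ord n); rewrite E /= => h; rewrite -h in hn.
- by case=> j _ ->; exists j.
Qed.

Lemma maxE x y : Num.max x y = x \/ Num.max x y = y.
Proof. by rewrite /Num.max; case: ifP; [right|left]. Qed.

Lemma dotmpP (r : 'I_2 -> R) A (x : 'I_2 -> R) c :
  dotmp r (mxv A x) <= c <-> forall i k, r i + (A i k + x k) <= c.
Proof.
rewrite /dotmp bmaxP //; split=> H i.
- move=> k; have := H i; rewrite /mxv.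
  have := le_bmax (fun k => A i k + x k) k; lra.
- have: bmax (fun k => A i k + x k) <= c - r i.
    by apply: bmax_le => // k; have := H i k; lra.
  rewrite /mxv; lra.
Qed.

Lemma mxvP A (x : 'I_2 -> R) i c :
  mxv A x i <= c <-> forall k, A i k + x k <= c.
Proof. exact: bmaxP. Qed.

Lemma vconjP (r : 'I_2 -> R) A (u : 'I_2 -> R) k :
  u k <= vconj (vxm r A) k <-> forall i, r i + A i k + u k <= 0.
Proof.
rewrite /vconj /vxm; split.
- move=> H i; have := le_bmax (fun i => r i + A i k) i; lra.
- move=> H; have: bmax (fun i => r i + A i k) <= - u k.
    by apply: bmax_le => // i; have := H i; lra.
  lra.
Qed.

Lemma T2E w h v D : 0 < w -> (h + w * D <= v <-> D <= v / w - h / w).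
Proof.
move=> hw; rewrite -mulrBl ler_pdivlMr //; lra.
Qed.

Lemma T1E wj wl hj hl v C : 0 < wj -> 0 < wl ->
  (wl / (wj + wl) * hj + wj / (wj + wl) * hl + (wj * wl) / (wj + wl) * C <= v
   <-> C <= (v / wj - hj / wj) + (v / wl - hl / wl)).
Proof.
move=> hj' hl'.
have hs : 0 < wj + wl by lra.
have hc : 0 < (wj * wl) / (wj + wl) by rewrite divr_gt0 // mulr_gt0.
rewrite -(ler_pM2l hc).
have -> : (wj * wl) / (wj + wl) * ((v / wj - hj / wj) + (v / wl - hl / wl))
   = v - wl / (wj + wl) * hj - wj / (wj + wl) * hl.
  field; rewrite ?gt_eqF //; lra.
lra.
Qed.

Lemma absE (u z e : R) :
  `|u| + `|z| <= e <-> (u + z <= e /\ -(u + z) <= e /\ z - u <= e /\ u - z <= e).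
Proof.
have [hu|hu] := lerP 0 u; have [hz|hz] := lerP 0 z;
  rewrite ?(ger0_norm hu) ?(ltr0_norm hu) ?(ger0_norm hz) ?(ltr0_norm hz);
  split; lra.
Qed.

Lemma BstarE (a b : R) : a <= b ->
  [/\ forall i, Bstar a b i i = 0,
      forall i k l, Bstar a b i k + Bstar a b k l <= Bstar a b i l,
      Bstar a b ord0 ord_max = 2 * a & Bstar a b ord_max ord0 = - (2 * b)].
Proof.
move=> hab; split => //.
- by move=> i; rewrite /Bstar eqxx.
- apply: I2P; apply: I2P; apply: I2P; rewrite /Bstar /=; lra.
Qed.

End Aux2.

Section Aux3.
Variable R : realType.
Implicit Types x y c : R.
Lemma maxleP x y c : Num.max x y <= c <-> x <= c /\ y <= c.
Proof. by rewrite ge_max; split => [/andP[]|[-> ->]]. Qed.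
Lemma maxaddP x y c : Num.max x y + c <= 0 <-> x + c <= 0 /\ y + c <= 0.
Proof.
have E : forall z, (z + c <= 0) = (z <= - c) by move=> z; rewrite -lerBrDr sub0r.
rewrite !E; exact: maxleP.
Qed.
Lemma bmaxaddP n (F : 'I_n -> R) c : (0 < n)%N ->
  bmax F + c <= 0 <-> forall j, F j + c <= 0.
Proof.
move=> hn.
have E : forall z, (z + c <= 0) = (z <= - c) by move=> z; rewrite -lerBrDr sub0r.
rewrite E bmaxP //; split => H j; [rewrite E | rewrite -E]; exact: H.
Qed.
End Aux3.


Section Main.
Variables (R : realType) (m : nat) (p1 p2 w d h : 'I_m -> R)
    (f1 f2 g1 g2 a b : R).
Hypotheses (hm : (0 < m)%N) (hw : forall j, 0 < w j) (hd : forall j, 0 < d j)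
  (hab : a <= b).

Local Notation B := (Bstar a b).
Local Notation o := (ovec p1 p2).
Local Notation s := (svec p1 p2 d f1 f2).
Local Notation tm := (tmvec p1 p2 d g1 g2).
Local Notation L v := (vmax (qvec p1 p2 w h v) s).
Local Notation RT v := (vmax (rmvec p1 p2 w h v) tm).

Definition Good v (y : 'I_2 -> R) :=
  (forall i, L v i <= y i) /\ (forall i, RT v i + y i <= 0) /\
  (forall i k, B i k + y k <= y i).

Definition Qc v (y : 'I_2 -> R) j i :=
  [/\ -(v / w j) + h j / w j + o j i <= y i, - d j + o j i <= y i,
      -(v / w j) + h j / w j + - o j i + y i <= 0 & - d j + - o j i + y i <= 0].

Lemma GoodiE v y i : (L v i <= y i /\ RT v i + y i <= 0) <->
  ((forall j, Qc v y j i) /\ vec2 f1 f2 i <= y i /\ - vec2 g1 g2 i + y i <= 0).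
Proof.
rewrite /vmax /svec /tmvec /vmax /qvec /rmvec /vconj.
split.
- case=> /maxleP [/(bmaxP _ _ hm) Hq /maxleP [/(bmaxP _ _ hm) Hs Hf]].
  move/maxaddP => [/(bmaxaddP _ _ hm) Hr /maxaddP [/(bmaxaddP _ _ hm) Ht Hg]].
  split; last by split. move=> j; split; [apply: Hq|apply: Hs|apply: Hr|apply: Ht].
- case=> H [Hf Hg]; split.
  + apply/maxleP; split; first by apply/(bmaxP _ _ hm) => j; case: (H j).
    apply/maxleP; split => //; by apply/(bmaxP _ _ hm) => j; case: (H j).
  + apply/maxaddP; split; first by apply/(bmaxaddP _ _ hm) => j; case: (H j).
    apply/maxaddP; split => //; by apply/(bmaxaddP _ _ hm) => j; case: (H j).
Qed.

Lemma GoodE v y : Good v y <->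
  (forall i, (forall j, Qc v y j i) /\ vec2 f1 f2 i <= y i /\
             - vec2 g1 g2 i + y i <= 0) /\
  (forall i k, B i k + y k <= y i).
Proof.
split.
- case=> [H1 [H2 H3]]; split => // i; apply/GoodiE; split; [exact: H1|exact: H2].
- case=> [H1 H3]; split; [|split] => // i; have /GoodiE[] := H1 i => //.
Qed.


Lemma objE j (v x1 x2 : R) :
  w j * (`|x1 - p1 j| + `|x2 - p2 j|) + h j <= v <->
  `|x1 - p1 j| + `|x2 - p2 j| <= v / w j - h j / w j.
Proof. rewrite -(T2E _ _ _ (hw j)) addrC; by []. Qed.

Lemma XE v x1 x2 (y : 'I_2 -> R) :
  y ord0 = x1 + x2 -> y ord_max = x2 - x1 ->
  (feasible p1 p2 d f1 f2 g1 g2 a b x1 x2 /\ objective p1 p2 w h x1 x2 <= v)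
  <-> Good v y.
Proof.
move=> Hy0 Hy1; rewrite GoodE /feasible /objective (bmaxP _ _ hm).
have [B0 _ B01 B10] := BstarE hab.
split.
- case=> [[Hd [F1 [G1 [F2 [G2 [A1 A2]]]]]] Ho]; split.
  + apply: I2P; rewrite /vec2 /= ?Hy0 ?Hy1; (split; [move=> j|lra]);
    have /absE [D1 [D2 [D3 D4]]] := Hd j;
    have /objE/absE [E1 [E2 [E3 E4]]] := Ho j;
    rewrite /Qc /ovec /vec2 /= ?Hy0 ?Hy1; split; lra.
  + apply: I2P; apply: I2P; rewrite ?B0 ?B01 ?B10 ?Hy0 ?Hy1; lra.
- case=> [H HB].
  have [H0 [Hf0 Hg0]] := H ord0; have [H1 [Hf1 Hg1]] := H ord_max.
  move: Hf0 Hg0 Hf1 Hg1; rewrite /vec2 /= Hy0 Hy1 => Hf0 Hg0 Hf1 Hg1.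
  have HB1 := HB ord0 ord_max; have HB2 := HB ord_max ord0.
  rewrite B01 Hy0 Hy1 in HB1; rewrite B10 Hy0 Hy1 in HB2.
  have Hj : forall j, [/\ `|x1 - p1 j| + `|x2 - p2 j| <= d j &
             `|x1 - p1 j| + `|x2 - p2 j| <= v / w j - h j / w j].
    move=> j; have [] := H0 j; have [] := H1 j.
    rewrite /ovec /vec2 /= Hy0 Hy1 => ? ? ? ? ? ? ? ?.
    by split; apply/absE; lra.
  split; first by do !split; try lra; move=> j; case: (Hj j).
  by move=> j; apply/objE; case: (Hj j).
Qed.


Hypothesis hts : dotmp tm (mxv B s) <= 0.
Local Notation th := (theta p1 p2 w d h f1 f2 g1 g2 a b).

Lemma RTge v i j : -(v / w j) + h j / w j + - o j i <= RT v i.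
Proof.
rewrite /vmax le_max; apply/orP; left.
exact: (le_bmax (fun j => -(v / w j) + h j / w j + vconj (o j) i) j).
Qed.
Lemma RTge2 v i : tm i <= RT v i.
Proof. by rewrite /vmax le_max lexx orbT. Qed.
Lemma Lge v k l : -(v / w l) + h l / w l + o l k <= L v k.
Proof.
rewrite /vmax le_max; apply/orP; left.
exact: (le_bmax (fun l => -(v / w l) + h l / w l + o l k) l).
Qed.
Lemma Lge2 v k : s k <= L v k.
Proof. by rewrite /vmax le_max lexx orbT. Qed.

Lemma KEY v : (forall i k, RT v i + (B i k + L v k) <= 0) <-> th <= v.
Proof.
split.
- move=> H; apply: bmax_le => // j; apply: bmax_le => // l.
  apply/maxleP; split; [|apply/maxleP; split].
  + apply/T1E => //; apply/dotmpP => i k; rewrite /vconj.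
    have := H i k; have := RTge v i j; have := Lge v k l; lra.
  + apply/T2E => //; apply/dotmpP => i k; rewrite /vconj.
    have := H i k; have := RTge v i j; have := Lge2 v k; lra.
  + apply/T2E => //; apply/dotmpP => i k.
    have := H i k; have := RTge2 v i; have := Lge v k l; lra.
- move=> Hth i k.
  have Hjl : forall j l,
      [/\ dotmp (vconj (o j)) (mxv B (o l)) <= (v / w j - h j / w j) + (v / w l - h l / w l),
          dotmp (vconj (o j)) (mxv B s) <= v / w j - h j / w j &
          dotmp tm (mxv B (o l)) <= v / w l - h l / w l].
    move=> j l.
    have := le_trans (le_bmax _ l) (le_trans (le_bmax _ j) Hth).
    move=> /maxleP [/T1E T1 /maxleP [/T2E T2 /T2E T3]].
    by split; [apply: T1|apply: T2|apply: T3].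
  rewrite /vmax.
  have [->|->] := maxE (rmvec p1 p2 w h v i) (tm i);
  have [->|->] := maxE (qvec p1 p2 w h v k) (s k).
  + rewrite /rmvec /qvec.
    have [j ->] := bmax_ex (fun j => -(v / w j) + h j / w j + vconj (o j) i) hm.
    have [l ->] := bmax_ex (fun l => -(v / w l) + h l / w l + o l k) hm.
    have [/dotmpP T1 _ _] := Hjl j l; have := T1 i k; rewrite /vconj; lra.
  + rewrite /rmvec.
    have [j ->] := bmax_ex (fun j => -(v / w j) + h j / w j + vconj (o j) i) hm.
    have [_ /dotmpP T2 _] := Hjl j j; have := T2 i k; rewrite /vconj; lra.
  + rewrite /qvec.
    have [l ->] := bmax_ex (fun l => -(v / w l) + h l / w l + o l k) hm.
    have [_ _ /dotmpP T3] := Hjl l l; have := T3 i k; lra.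
  + by move/dotmpP: hts; apply.
Qed.


Lemma GoodFix v y : Good v y -> forall i, mxv B y i = y i.
Proof.
case=> _ [_ H3] i; have [B0 _ _ _] := BstarE hab; apply: le_anti; apply/andP; split.
- by apply/mxvP => k; apply: H3.
- by have := le_bmax (fun k => B i k + y k) i; rewrite B0 add0r.
Qed.

Lemma GoodB v u : (forall i, L v i <= u i) ->
  (forall i, u i <= vconj (vxm (RT v) B) i) -> Good v (mxv B u).
Proof.
move=> HL HU; have [B0 Btr _ _] := BstarE hab; split; [|split].
- move=> i; apply: le_trans (HL i) _.
  by have := le_bmax (fun k => B i k + u k) i; rewrite B0 add0r.
- move=> i; have : mxv B u i <= - RT v i.
    by apply/mxvP => k; have /vconjP/(_ i) := HU k; lra.
  lra.
- move=> i k; have : mxv B u k <= mxv B u i - B i k.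
    apply/mxvP => l; have := le_bmax (fun l => B i l + u l) l.
    rewrite /mxv; have := Btr i k l; lra.
  lra.
Qed.

Lemma GoodU v y : Good v y -> forall k, y k <= vconj (vxm (RT v) B) k.
Proof.
case=> _ [H2 H3] k; apply/vconjP => i; have := H2 i; have := H3 i k; lra.
Qed.

Lemma GoodKey v y : Good v y -> th <= v.
Proof.
case=> H1 [H2 H3]; apply/KEY => i k.
have := H1 k; have := H2 i; have := H3 i k; lra.
Qed.

Lemma ExistsGood v : th <= v -> Good v (mxv B (L v)).
Proof.
move/KEY => H; apply: GoodB => // k; apply/vconjP => i; have := H i k; lra.
Qed.

Definition Cf v x1 x2 :=
  feasible p1 p2 d f1 f2 g1 g2 a b x1 x2 /\ objective p1 p2 w h x1 x2 <= v.

Lemma P1 v x1 x2 : Cf v x1 x2 -> th <= v.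
Proof.
move=> H; apply: (@GoodKey v (vec2 (x1 + x2) (x2 - x1))).
by apply/XE.
Qed.

Lemma P2 v : th <= v -> exists x1 x2, Cf v x1 x2.
Proof.
move/ExistsGood => H.
set y := mxv B (L v) in H.
exists ((y ord0 - y ord_max) / 2), ((y ord0 + y ord_max) / 2).
apply/(@XE v _ _ y) => //; lra.
Qed.

Lemma Char v x1 x2 : Cf v x1 x2 <->
  exists u : 'I_2 -> R,
    (forall i, L v i <= u i) /\
    (forall i, u i <= vconj (vxm (RT v) B) i) /\
    x1 = (mxv B u) ord0 / 2 - (mxv B u) ord_max / 2 /\
    x2 = (mxv B u) ord0 / 2 + (mxv B u) ord_max / 2.
Proof.
split.
- move=> H; have HG : Good v (vec2 (x1 + x2) (x2 - x1)) by apply/XE.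
  exists (vec2 (x1 + x2) (x2 - x1)); split; first by case: HG.
  split; first exact: GoodU.
  rewrite !(GoodFix HG) /vec2 /=; split; lra.
- case=> u [HL [HU [E1 E2]]]; have HG := GoodB HL HU.
  apply/(@XE v _ _ (mxv B u)) => //; lra.
Qed.

End Main.


Unset Implicit Arguments. Set Strict Implicit.

Theorem theorem4 (R : realType) (m : nat) (p1 p2 w d h : 'I_m -> R)
    (f1 f2 g1 g2 a b : R) :
  (0 < m)%N ->
  (forall j, 0 < w j) -> (forall j, 0 < d j) ->
  f1 <= g1 -> f2 <= g2 -> a <= b ->
  let B := Bstar a b in
  let s := svec p1 p2 d f1 f2 in
  let tm := tmvec p1 p2 d g1 g2 in
  dotmp tm (mxv B s) <= 0 ->
  let th := theta p1 p2 w d h f1 f2 g1 g2 a b in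
  let q := qvec p1 p2 w h th in
  let rm := rmvec p1 p2 w h th in
  (* th is the minimum value of the problem *)
  ((exists x1 x2, feasible p1 p2 d f1 f2 g1 g2 a b x1 x2 /\
                  objective p1 p2 w h x1 x2 = th) /\
   (forall x1 x2, feasible p1 p2 d f1 f2 g1 g2 a b x1 x2 ->
                  th <= objective p1 p2 w h x1 x2)) /\
  (* the solutions are exactly the vectors x obtained from y = Bstar u
     with q (+) s <= u <= ((r^- (+) t^-) Bstar)^- *)
  (forall x1 x2,
     (feasible p1 p2 d f1 f2 g1 g2 a b x1 x2 /\
      objective p1 p2 w h x1 x2 = th) <->
     exists u : 'I_2 -> R,
       (forall i, vmax q s i <= u i) /\
       (forall i, u i <= vconj (vxm (vmax rm tm) B) i) /\
       x1 = (mxv B u) ord0 / 2 - (mxv B u) ord_max / 2 /\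
       x2 = (mxv B u) ord0 / 2 + (mxv B u) ord_max / 2).
Proof.
move=> hm hw hd _ _ hab B s tm hts th q rm.
have LB : forall x1 x2, feasible p1 p2 d f1 f2 g1 g2 a b x1 x2 ->
    th <= objective p1 p2 w h x1 x2.
  by move=> x1 x2 Hf; apply: (P1 hm hw hab hts (x1 := x1) (x2 := x2)); split.
split; first split => //.
- have [x1 [x2 [Hf Ho]]] := P2 hm hw hab hts (lexx th).
  exists x1, x2; split => //; apply: le_anti; rewrite Ho /=; exact: LB.
- move=> x1 x2; split.
  + case=> Hf Ho; apply/(@Char _ _ p1 p2 w d h f1 f2 g1 g2 a b hm hw hab th x1 x2); split => //; by rewrite Ho lexx.
  + move=> Hu; have [Hf Ho] := proj2 (@Char _ _ p1 p2 w d h f1 f2 g1 g2 a b hm hw hab th x1 x2) Hu; split => //; apply: le_anti; rewrite Ho /=; exact: LB.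
Qed.
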